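(* InqBQ is not entailment-compact relative to id-models: there exist a set of formulas $\Phi$ and a formula $\psi$ such that $\Phi\models_{\mathrm{id}}\psi$ but $\Phi_0\not\models_{\mathrm{id}}\psi$ for every finite $\Phi_0\subseteq\Phi$.
   Context: Inquisitive first-order logic InqBQ. A signature consists of predicate symbols and function symbols, each with an arity; function symbols are either rigid or non-rigid, and function symbols of arity $0$ are constant symbols. Terms are built from variables and function symbols as usual. Formulas are given by $\phi ::= P(t_1,\dots,t_n)\mid (t=t')\mid \bot\mid (\phi\wedge\phi)\mid(\phi\mathbin{\vee\!\!\!\vee}\phi)\mid(\phi\to\phi)\mid\forall x\phi\mid\exists^{\mathsf i}x\phi$, where $\mathbin{\vee\!\!\!\vee}$ is inquisitive disjunction and $\exists^{\mathsf i}$ is the inquisitive existential quantifier. An id-model is a triple $M=(W,D,I)$ with $W$ a non-empty set of worlds, $D$ a non-empty domain, and $I$ assigning to each world $w$ an interpretation $I_w$ giving each $n$-ary predicate $P$ a relation $P_w\subseteq D^n$ and each $n$-ary function symbol $f$ a function $f_w:D^n\to D$ (rigid symbols get the same interpretation at every world); equality is interpreted as identity on $D$ at every world. Term values $[t]^g_w$ are defined as usual. Support of a formula at a state $s\subseteq W$ under an assignment $g$: $M,s\models_g P(t_1,\dots,t_n)$ iff $([t_1]^g_w,\dots,[t_n]^g_w)\in P_w$ for all $w\in s$; $M,s\models_g t=t'$ iff $[t]^g_w=[t']^g_w$ for all $w\in s$; $M,s\models_g\bot$ iff $s=\emptyset$; $\wedge$ is conjunction of support; $M,s\models_g\phi\mathbin{\vee\!\!\!\vee}\psi$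 iff $M,s\models_g\phi$ or $M,s\models_g\psi$; $M,s\models_g\phi\to\psi$ iff for every $t\subseteq s$, $M,t\models_g\phi$ implies $M,t\models_g\psi$; $M,s\models_g\forall x\phi$ iff $M,s\models_{g[x\mapsto d]}\phi$ for all $d\in D$; $M,s\models_g\exists^{\mathsf i}x\phi$ iff $M,s\models_{g[x\mapsto d]}\phi$ for some $d\in D$. id-entailment: $\Phi\models_{\mathrm{id}}\psi$ means that for every id-model $M$, state $s\subseteq W$ and assignment $g$, if $M,s\models_g\phi$ for all $\phi\in\Phi$ then $M,s\models_g\psi$. *)

(* Defs.v *)
From mathcomp Require Import all_boot.
From Stdlib Require Import List.

Set Implicit Arguments.
Unset Strict Implicit.
Unset Printing Implicit Defensive.

Record signature := Signature {
  Pred : Type;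
  pred_arity : Pred -> nat;
  Fun : Type;
  fun_arity : Fun -> nat;
  rigid : Fun -> bool
}.

Section Syntax.
Variable S : signature.

Inductive term : Type :=
  | Var : nat -> term
  | App : forall f : Fun S, ('I_(fun_arity f) -> term) -> term.

Inductive form : Type :=
  | Atom : forall P : Pred S, ('I_(pred_arity P) -> term) -> form
  | Eq : term -> term -> form
  | Bot : form
  | And : form -> form -> form
  | IOr : form -> form -> form
  | Imp : form -> form -> form
  | All : nat -> form -> form
  | IEx : nat -> form -> form.

(* id-models: equality is interpreted as identity on D (built into
   the support clause for Eq below). *)
Record idmodel := IdModel {
  World : Type;
  Dom : Type;
  World_ne : inhabited World;
  Dom_ne : inhabited Dom;
  predI : World -> forall P : Pred S, ('I_(pred_arity P) -> Dom) -> Prop;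
  funI : World -> forall f : Fun S, ('I_(fun_arity f) -> Dom) -> Dom;
  funI_rigid : forall f : Fun S, rigid f -> forall w w' : World, @funI w f = @funI w' f
}.

Arguments predI : clear implicits.
Arguments funI : clear implicits.

Variable M : idmodel.

Definition upd (g : nat -> Dom M) (x : nat) (d : Dom M) : nat -> Dom M :=
  fun y => if y == x then d else g y.

Fixpoint tval (w : World M) (g : nat -> Dom M) (t : term) : Dom M :=
  match t with
  | Var x => g x
  | App f a => funI M w f (fun i => tval w g (a i))
  end.

Fixpoint supports (s : World M -> Prop) (g : nat -> Dom M) (phi : form)
  : Prop :=
  match phi with
  | Atom P a => forall w, s w -> predI M w P (fun i => tval w g (a i))
  | Eq t t' => forall w, s w -> tval w g t = tval w g t'
  | Bot => forall w, ~ s w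
  | And p q => supports s g p /\ supports s g q
  | IOr p q => supports s g p \/ supports s g q
  | Imp p q => forall t : World M -> Prop, (forall w, t w -> s w) ->
                 supports t g p -> supports t g q
  | All x p => forall d : Dom M, supports s (upd g x d) p
  | IEx x p => exists d : Dom M, supports s (upd g x d) p
  end.

End Syntax.

Definition id_entails (S : signature) (Phi : form S -> Prop) (psi : form S)
  : Prop :=
  forall (M : idmodel S) (s : World M -> Prop) (g : nat -> Dom M),
    (forall phi, Phi phi -> supports s g phi) -> supports s g psi.

(* Main.v *)
Require Import Defs.
From mathcomp Require Import all_boot.
From Stdlib Require Import List Classical FunctionalExtensionality Lia.
From mathcomp Require Import zify.

Set Implicit Arguments.
Unset Strict Implicit.
Unset Printing Implicit Defensive.

Inductive F := fz | fs | fT | fc | fe.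
Definition far (f : F) : nat := match f with fs => 1 | _ => 0 end.
Definition frig (f : F) : bool := match f with fc | fe => false | _ => true end.
Definition Sg : signature := @Signature unit (fun _ => 2) F far frig.

Definition emp0 (A : Type) : 'I_0 -> A.
Proof. by case. Defined.

Definition tz : term Sg := @App Sg fz (emp0 _).
Definition tT : term Sg := @App Sg fT (emp0 _).
Definition tc : term Sg := @App Sg fc (emp0 _).
Definition te : term Sg := @App Sg fe (emp0 _).
Definition tsc (t : term Sg) : term Sg := @App Sg fs (fun _ => t).
Definition v (n : nat) : term Sg := Var Sg n.
Definition le (a b : term Sg) : form Sg :=
  @Atom Sg tt (fun i => if val i == 0 then a else b).
Definition neg (p : form Sg) : form Sg := Imp p (Bot Sg).

Definition Pair := All 0 (IOr (le tc (v 0)) (le (tsc (v 0)) te)).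
Definition Int := IEx 0 (And (le tc (v 0)) (le (v 0) te)).
Definition Qf := IEx 0 (IEx 1 (neg (And (Eq tc (v 0)) (Eq te (v 1))))).
Definition psi := Imp (Imp Pair Int) Qf.

Definition A1 := All 0 (le tz (v 0)).
Definition A2 := All 0 (All 1 (Imp (le (v 0) (v 1)) (Imp (neg (Eq (v 0) (v 1))) (le (tsc (v 0)) (v 1))))).
Definition A3 := All 0 (Imp (neg (Eq (tsc (v 0)) (v 0))) (neg (le (tsc (v 0)) (v 0)))).
Definition A4 := All 0 (Imp (Eq (tsc (v 0)) (v 0)) (Eq (v 0) tT)).
Definition A5 := All 0 (IOr (Eq (v 0) tz) (IEx 1 (And (Eq (v 0) (tsc (v 1))) (neg (Eq (v 1) (v 0)))))).
Fixpoint stdt (n : nat) : term Sg := match n with 0 => tz | n.+1 => tsc (stdt n) end.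
Definition PhiN (n : nat) := neg (Eq tT (stdt n)).

Definition Phi (p : form Sg) : Prop :=
  p = A1 \/ p = A2 \/ p = A3 \/ p = A4 \/ p = A5 \/ exists n, p = PhiN n.

Section Fin.
Variable K : nat.
Definition Sf (x : 'I_K.+1) : 'I_K.+1 := inord (minn x.+1 K).
Definition fI (w : 'I_K.+1 * 'I_K.+1) (f : F) : ('I_(far f) -> 'I_K.+1) -> 'I_K.+1 :=
  match f return ('I_(far f) -> 'I_K.+1) -> 'I_K.+1 with
  | fz => fun _ => ord0
  | fs => fun a => Sf (a ord0)
  | fT => fun _ => ord_max
  | fc => fun _ => w.1
  | fe => fun _ => w.2
  end.
Definition pI (w : 'I_K.+1 * 'I_K.+1) (P : unit) (a : 'I_2 -> 'I_K.+1) : Prop :=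
  a ord0 <= a ord_max.
Lemma fI_rigid : forall f : Fun Sg, rigid f -> forall w w', @fI w f = @fI w' f.
Proof. by case. Qed.
Definition FM : idmodel Sg :=
  @IdModel Sg ('I_K.+1 * 'I_K.+1) 'I_K.+1 (inhabits (ord0, ord0)) (inhabits ord0)
    pI fI fI_rigid.
End Fin.

Arguments upd [S M] g x d _ /.
Section FinP.
Variable K : nat.
Let M := FM K.
Let s : World M -> Prop := fun _ => True.

Lemma Sf_val (x : 'I_K.+1) : nat_of_ord (Sf x) = minn x.+1 K.
Proof. by rewrite /Sf inordK // ltnS geq_minr. Qed.

Lemma fA1 g : supports s g A1.
Proof. move=> d w _ /=. by []. Qed.
Lemma fA2 g : supports s g A2.
Proof.
move=> a b t _ H1 t' Ht' H2 w Hw /=. have := H1 w (Ht' w Hw). rewrite /= /pI /upd /= => Hab.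
rewrite Sf_val.
have Hne : a <> b.
  move=> E. apply: (H2 (fun x => x = w)) => //. by move=> x ->.
have : (a < b)%N. rewrite ltn_neqAle Hab andbT. apply/negP => /eqP E. apply: Hne. exact: val_inj.
move=> lt. exact: leq_trans (geq_minl _ _) lt.
Qed.
Lemma fA3 g : supports s g A3.
Proof.
move=> p t _ H1 t' Ht' H2 w Hw. have := H2 w Hw. rewrite /= /pI /upd /= Sf_val => Hle.
apply: (H1 (fun x => x = w)) (erefl w); first by move=> x ->; exact: Ht'.
move=> x _ /=. apply: val_inj => /=. rewrite Sf_val. have := ltn_ord p. move: Hle. rewrite /upd /=. lia.
Qed.
Lemma fA4 g : supports s g A4.
Proof.
move=> p t _ H1 w Hw /=. have := H1 w Hw => /= /(congr1 val) /=. rewrite Sf_val => E.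
apply: val_inj => /=. have := ltn_ord p. lia.
Qed.
Lemma fA5 g : supports s g A5.
Proof.
move=> x /=. case: (posnP x) => [x0|xpos].
  left => w _ /=. apply: val_inj. exact: x0.
right. exists (inord x.-1). split.
  move=> w _ /=. apply: val_inj => /=. rewrite Sf_val inordK; have := ltn_ord x; lia.
move=> t _ H w Hw. have := H w Hw => /= /(congr1 val) /=. rewrite inordK; have := ltn_ord x; lia.
Qed.
Fixpoint stdf (n : nat) : 'I_K.+1 := match n with 0 => ord0 | n.+1 => Sf (stdf n) end.
Lemma stdf_val n : nat_of_ord (stdf n) = minn n K.
Proof. elim: n => [|n IH] /=; first by rewrite min0n. rewrite Sf_val IH. lia. Qed.
Lemma tval_std (w : World M) (g : nat -> Dom M) n : Defs.tval w g (stdt n) = stdf n.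
Proof. elim: n => [|n IH] //=. by rewrite IH. Qed.
Lemma fPhiN g n : n < K -> supports s g (PhiN n).
Proof.
move=> Hn t _ H w Hw. have := H w Hw. rewrite /= tval_std => /(congr1 val) /=.
rewrite stdf_val. lia.
Qed.
Lemma fnotQ g : ~ supports s g Qf.
Proof.
move=> [x [y H]]. apply: (H (fun w => w = (x, y))) (erefl _) => //.
split; by move=> w -> .
Qed.
Lemma fFin g : supports s g (Imp Pair Int).
Proof.
move=> t _ HP.
suff: forall n, n <= K -> (exists d : 'I_K.+1, forall w, t w -> w.1 <= d /\ d <= w.2)
        \/ (forall w, t w -> n <= w.2).
  move=> /(_ K (leqnn _)) [[d Hd]|H].
    exists d. split => w Hw /=; rewrite /= /pI /upd /=; by case: (Hd w Hw).
  exists ord_max. split => w Hw /=; rewrite /= /pI /upd /=.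
    by have := ltn_ord w.1; rewrite ltnS.
  exact: H.
elim=> [|n IH] Hn; first by right.
case: (IH (ltnW Hn)) => [H|H]; first by left.
case: (HP (inord n)) => /= Hd.
  left. exists (inord n) => w Hw. split.
    by have := Hd w Hw; rewrite /= /pI /upd /=.
  by rewrite inordK ?H // ltnS ltnW.
right => w Hw. have := Hd w Hw. rewrite /= /pI /upd /= Sf_val inordK; last by rewrite ltnS ltnW.
lia.
Qed.
End FinP.

Section Inf.
Variable M : idmodel Sg.
Definition ZD (w : World M) : Dom M := @funI Sg M w fz (emp0 _).
Definition TD (w : World M) : Dom M := @funI Sg M w fT (emp0 _).
Definition CD (w : World M) : Dom M := @funI Sg M w fc (emp0 _).
Definition ED (w : World M) : Dom M := @funI Sg M w fe (emp0 _).
Definition SC (w : World M) (d : Dom M) : Dom M := @funI Sg M w fs (fun _ => d).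
Definition LE (w : World M) (a b : Dom M) : Prop :=
  @Defs.predI Sg M w tt (fun i : 'I_2 => if val i == 0 then a else b).

Lemma e0 (A : Type) (f h : 'I_0 -> A) : f = h.
Proof. apply: functional_extensionality; by case. Qed.

Lemma tv_z (w : World M) (g : nat -> Dom M) : Defs.tval w g tz = ZD w.
Proof. rewrite /= /ZD. f_equal. exact: e0. Qed.
Lemma tv_T (w : World M) (g : nat -> Dom M) : Defs.tval w g tT = TD w.
Proof. rewrite /= /TD. f_equal. exact: e0. Qed.
Lemma tv_c (w : World M) (g : nat -> Dom M) : Defs.tval w g tc = CD w.
Proof. rewrite /= /CD. f_equal. exact: e0. Qed.
Lemma tv_e (w : World M) (g : nat -> Dom M) : Defs.tval w g te = ED w.
Proof. rewrite /= /ED. f_equal. exact: e0. Qed.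
Lemma tv_s (w : World M) (g : nat -> Dom M) t : Defs.tval w g (tsc t) = SC w (Defs.tval w g t).
Proof. by []. Qed.
Lemma tv_v (w : World M) (g : nat -> Dom M) n : Defs.tval w g (v n) = g n.
Proof. by []. Qed.

Lemma sup_le (t : World M -> Prop) (g : nat -> Dom M) a b : supports t g (le a b) <->
  forall w, t w -> LE w (Defs.tval w g a) (Defs.tval w g b).
Proof.
rewrite /= /LE. suff E : forall w, (fun i : 'I_2 => Defs.tval w g (if val i == 0 then a else b)) =
   (fun i : 'I_2 => if val i == 0 then Defs.tval w g a else Defs.tval w g b).
  by split => H w Hw; [rewrite -E | rewrite E]; apply: H.
move=> w; apply: functional_extensionality => i. by case: ifP.
Qed.

Lemma rig_z (w w' : World M) : ZD w = ZD w'.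
Proof. by rewrite /ZD (@funI_rigid Sg M fz isT w w'). Qed.
Lemma rig_T (w w' : World M) : TD w = TD w'.
Proof. by rewrite /TD (@funI_rigid Sg M fT isT w w'). Qed.
Lemma rig_s (w w' : World M) d : SC w d = SC w' d.
Proof. by rewrite /SC (@funI_rigid Sg M fs isT w w'). Qed.

Definition single (w : World M) : World M -> Prop := fun x => x = w.

Fixpoint stdD (w : World M) (n : nat) : Dom M :=
  match n with 0 => ZD w | n.+1 => SC w (stdD w n) end.
Lemma tv_std (w : World M) (g : nat -> Dom M) n : Defs.tval w g (stdt n) = stdD w n.
Proof. elim: n => [|n IH] /=; first exact: tv_z. by rewrite IH. Qed.
Lemma rig_std (w w' : World M) n : stdD w n = stdD w' n.
Proof. elim: n => [|n IH] /=; first exact: rig_z. by rewrite IH (rig_s w w'). Qed.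

Lemma single_sub (s : World M -> Prop) w : s w -> forall x, single w x -> s x.
Proof. by move=> Hw x ->. Qed.

Lemma entails_M (s : World M -> Prop) (g : nat -> Dom M) :
  (forall p, Phi p -> supports s g p) -> supports s g psi.
Proof.
move=> HPhi t Hts HFin.
apply: NNPP => HnQ.
have Hw : forall x y : Dom M, exists w, t w /\ CD w = x /\ ED w = y.
  move=> x y. apply: NNPP => Hn. apply: HnQ. exists x, y => t' Ht' [H1 H2] w Hw.
  apply: Hn. exists w. split; first exact: Ht'.
  have := H1 w Hw. have := H2 w Hw. rewrite tv_c tv_e /=. by move=> -> ->.
have [d0] := Dom_ne M.
have [w0 [Hw0 _]] := Hw d0 d0.
have Hsw0 : s w0 by apply: Hts.
pose Z := ZD w0. pose S := SC w0. pose T := TD w0.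
pose std := stdD w0.
have eZ : forall w, ZD w = Z by move=> w; exact: (rig_z w w0).
have eT : forall w, TD w = T by move=> w; exact: (rig_T w w0).
have eS : forall w d, SC w d = S d by move=> w d; exact: (rig_s w w0).
have estd : forall w n, stdD w n = std n by move=> w n; exact: (rig_std w w0).
have P1 : Phi A1 by rewrite /Phi; tauto.
have P2 : Phi A2 by rewrite /Phi; tauto.
have P3 : Phi A3 by rewrite /Phi; tauto.
have P4 : Phi A4 by rewrite /Phi; tauto.
have P5 : Phi A5 by rewrite /Phi; tauto.
have PN : forall n, Phi (PhiN n) by move=> n; rewrite /Phi; right; right; right; right; right; exists n.
have ax1 : forall w, s w -> forall d, LE w Z d.
  move=> w Hws d. have := HPhi _ P1 d. move/sup_le => /(_ w Hws). by rewrite tv_z eZ.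
have ax2 : forall w, s w -> forall a b, LE w a b -> a <> b -> LE w (S a) b.
  move=> w Hws a b Hab Hne.
  have : supports (single w) (upd (upd g 0 a) 1 b) (le (tsc (v 0)) (v 1)).
    apply: (HPhi _ P2 a b (single w) (single_sub Hws)).
    - apply/sup_le => x ->. exact: Hab.
    - by [].
    - move=> t3 _ H x Hx. exact: Hne (H x Hx).
  move/sup_le => /(_ w erefl). by rewrite tv_s eS.
have ax3 : forall w, s w -> forall p, S p <> p -> ~ LE w (S p) p.
  move=> w Hws p Hne HLE.
  apply: (HPhi _ P3 p (single w) (single_sub Hws) _ (single w) (fun x => id) _ w erefl).
  - move=> t3 _ H x Hx. apply: Hne. have := H x Hx. by rewrite tv_s eS.
  - apply/sup_le => x ->. rewrite tv_s eS. exact: HLE.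
have ax4 : forall x, S x = x -> x = T.
  move=> x E.
  have := HPhi _ P4 x (single w0) (single_sub Hsw0) _ w0 erefl.
  rewrite tv_T eT. apply. move=> y ->. rewrite tv_s eS. exact: E.
have ax5 : forall x, x = Z \/ exists p, x = S p /\ p <> x.
  move=> x. case: (HPhi _ P5 x) => [H|[p [H1 H2]]].
    left. have := H w0 Hsw0. by rewrite tv_z eZ.
  right. exists p. split.
    have := H1 w0 Hsw0. by rewrite tv_s eS.
  move=> E. apply: (H2 (single w0) (single_sub Hsw0) _ w0 erefl).
  move=> y ->. exact: E.
have axN : forall n, T <> std n.
  move=> n E. apply: (HPhi _ (PN n) (single w0) (single_sub Hsw0) _ w0 erefl).
  move=> y ->. by rewrite tv_T tv_std eT estd.
pose nonstd (b : Dom M) := forall n, b <> std n.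
have stdle : forall w, s w -> forall n b, nonstd b -> LE w (std n) b.
  move=> w Hws. elim=> [|n IH] b Hb; first exact: ax1.
  apply: ax2 => //; first exact: IH. move=> E; exact: (Hb n).
have nsT : nonstd T by move=> n; exact: axN.
have stdns : forall d, ~ nonstd d -> exists n, d = std n.
  move=> d Hd. apply: NNPP => Hn. apply: Hd => n E. apply: Hn. by exists n.
pose t' := fun w => t w /\ (exists n, CD w = std n) /\ nonstd (ED w).
have Ht' : forall w, t' w -> t w by move=> w [].
have HI := HFin t' Ht'.
have [d [/sup_le H1 /sup_le H2]] : supports t' g Int.
  apply: HI => d. case: (classic (nonstd d)) => Hd.
    left. apply/sup_le => w [Htw [[n Hn] Hne]]. rewrite tv_c Hn /=.
    exact: stdle (Hts _ Htw) _ _ Hd.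
  right. have [n En] := stdns d Hd.
  apply/sup_le => w [Htw [_ Hne]]. rewrite tv_s tv_e eS /= En.
  exact: (stdle w (Hts _ Htw) n.+1).
case: (classic (nonstd d)) => Hd.
  case: (ax5 d) => [Ed|[p [Ep Hpd]]]; first exact: (Hd 0).
  have Hp : nonstd p.
    move=> m E. apply: (Hd m.+1). by rewrite Ep E.
  have [w [Htw [Ec Ee]]] := Hw Z p.
  have Hw' : t' w by split; [exact: Htw | split; [exists 0; exact: Ec | by rewrite Ee]].
  have := H2 w Hw'. rewrite tv_e Ee /= Ep. apply: (ax3 _ (Hts _ Htw) p).
  move=> E. apply: Hpd. by rewrite Ep E.
have [n En] := stdns d Hd.
have [w [Htw [Ec Ee]]] := Hw (S d) T.
have Hw' : t' w.
  split; first exact: Htw. split; last by rewrite Ee. exists n.+1. by rewrite Ec En.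
have := H1 w Hw'. rewrite tv_c Ec /=. apply: (ax3 _ (Hts _ Htw) d).
move=> E. apply: (axN n). by rewrite -(ax4 _ E).
Qed.
End Inf.

Theorem mainTheorem4 :
  exists (S : signature) (Phi : form S -> Prop) (psi : form S),
    id_entails Phi psi /\
    forall Phi0 : list (form S),
      (forall phi, List.In phi Phi0 -> Phi phi) ->
      ~ id_entails (fun phi => List.In phi Phi0) psi.
Proof.
exists Sg, Phi, psi. split; first by move=> M s g; exact: entails_M.
move=> Phi0 HP0 Hent.
have [K HK] : exists K, forall p, List.In p Phi0 ->
    (p = A1 \/ p = A2 \/ p = A3 \/ p = A4 \/ p = A5) \/ exists n, n < K /\ p = PhiN n.
  elim: Phi0 HP0 {Hent} => [|a l IH] H; first by exists 0.
  have [K HK] := IH (fun p Hp => H p (or_intror Hp)).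
  have [Ha|[n En]] : (a = A1 \/ a = A2 \/ a = A3 \/ a = A4 \/ a = A5) \/ exists n, a = PhiN n.
    have := H a (or_introl erefl). rewrite /Phi. tauto.
    exists K => p [<-|Hp]; [by left | exact: HK].
  exists (maxn K n.+1) => p [<-|Hp].
    right. exists n. split => //. by rewrite leq_max leqnn orbT.
  case: (HK p Hp) => [|[m [Hm ->]]]; first by left.
  right. exists m. split => //. by rewrite leq_max Hm.
have Hs := Hent (FM K) (fun _ => True) (fun _ => ord0).
have Hpsi : supports (M:=FM K) (fun _ => True) (fun _ => ord0) psi.
  apply: Hs => p Hp. case: (HK p Hp) => [H|[n [Hn ->]]]; last exact: fPhiN.
  by case: H => [->|[->|[->|[->|->]]]]; [exact: fA1|exact: fA2|exact: fA3|exact: fA4|exact: fA5].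
apply: (fnotQ (K:=K) (g:=fun _ => ord0)).
apply: (Hpsi (fun _ => True)) => //. exact: fFin.
Qed.
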